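(* Let $\mathcal{P}=(\mathcal{R},\mathcal{F},\mathcal{D},\mathcal{B})$ be a ground Capacity Logic Program, let $W^{\mathcal{D}}_{\mathcal{P}}$ be its set of belief worlds and $\xi^{\mathcal{B}}:\mathbb{P}(W^{\mathcal{D}}_{\mathcal{P}})\to\mathbb{R}^2$ the capacity for sets of belief worlds. Then both $$(W^{\mathcal{D}}_{\mathcal{P}},\ \mathbb{P}(W^{\mathcal{D}}_{\mathcal{P}}),\ \mathrm{proj}_B\circ\xi^{\mathcal{B}})\quad\text{and}\quad (W^{\mathcal{D}}_{\mathcal{P}},\ \mathbb{P}(W^{\mathcal{D}}_{\mathcal{P}}),\ \mathrm{proj}_P\circ\xi^{\mathcal{B}})$$ are normalized capacity spaces; i.e. each of $\mathrm{proj}_B\circ\xi^{\mathcal{B}}$ and $\mathrm{proj}_P\circ\xi^{\mathcal{B}}$ is a capacity on $\mathbb{P}(W^{\mathcal{D}}_{\mathcal{P}})$ and takes the value $1$ on $W^{\mathcal{D}}_{\mathcal{P}}$.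
   Context: All sets are finite; there are no function symbols. Capacity: for a finite nonempty set $X$, a capacity is a function $\xi:\mathbb{P}(X)\to[0,1]$ with $\xi(\emptyset)=0$ and $A\subseteq B\Rightarrow \xi(A)\le\xi(B)$; it is normalized if $\xi(X)=1$. A (normalized) capacity space is a triple $(X,\mathbb{P}(X),\xi)$ with $\xi$ a (normalized) capacity. Belief domains: a belief domain $D$ has a finite nonempty frame of discernment $X_D$ and a mass function $\mathit{mass}(D,\cdot):\mathbb{P}(X_D)\to\mathbb{R}$ with $\mathit{mass}(D,\emptyset)=0$, $\mathit{mass}(D,A)\ge 0$ for all $A$, and $\sum_{A\subseteq X_D}\mathit{mass}(D,A)=1$. For $A\subseteq X_D$: $\mathit{Belief}(D,A)=\sum_{B\subseteq A}\mathit{mass}(D,B)$ and $\mathit{Plaus}(D,A)=1-\mathit{Belief}(D,X_D\setminus A)$. Subsets of $X_D$ are called belief events of $D$. Capacity Logic Program (CaLP): a tuple $\mathcal{P}=(\mathcal{R},\mathcal{F},\mathcal{D},\mathcal{B})$ where $\mathcal{R}$ is a finite set of ground rules, $\mathcal{F}$ is a finite set of ground probabilistic facts $p::f$ ($p\in[0,1]$, $f$ a ground atom), $\mathcal{D}$ is a finite set of belief domains, and $\mathcal{B}$ is the set of all ground belief facts $\mathit{belief}(D,B)$ with $D\in\mathcal{D}$ and $B\subseteq X_D$. A negated belief fact $\neg\,\mathit{belief}(D,B)$ is identified with $\mathit{belief}(D,X_D\setminus B)$, written $\mathit{belief}(D,\neg B)$. Canonicalization: for a set $Bel$ of belief facts,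 $\mathrm{doms}(Bel)$ is the set of domains occurring in it, and $\mathrm{canon}(Bel)=\{\mathit{belief}(D,\bigcap_{\mathit{belief}(D,B_i)\in Bel}B_i)\mid D\in\mathrm{doms}(Bel)\}$. $Bel$ is consistent if $\mathrm{canon}(Bel)$ contains no fact whose event is $\emptyset$. Belief worlds: a belief world of $\mathcal{P}$ is a tuple $w=(\mathcal{R},\mathcal{F}',\mathcal{D},\mathcal{B}')$ with $\mathcal{F}'\subseteq\mathcal{F}$ and $\mathcal{B}'\subseteq\mathcal{B}$ a consistent, canonical ($\mathrm{canon}(\mathcal{B}')=\mathcal{B}'$) set containing a belief fact for every domain in $\mathcal{D}$ (hence exactly one per domain). $W^{\mathcal{D}}_{\mathcal{P}}$ is the set of all belief worlds. Interval arithmetic: for nonnegative intervals, $[a,b]\,\widehat{\times}\,[c,d]=[ac,bd]$ and $[a,b]\,\widehat{+}\,[c,d]=[a+c,b+d]$; $\widehat{\prod}$ and $\widehat{\sum}$ are the iterated versions. Intervals are identified with elements of $\mathbb{R}^2$; $\mathrm{proj}_B([a,b])=a$ and $\mathrm{proj}_P([a,b])=b$. $\beta_{prb}$: for $\mathcal{F}'\subseteq\mathcal{F}$, $\beta_{prb}(\mathcal{F}')=\widehat{\prod}_{p::a\in\mathcal{F},\,a\in\mathcal{F}'}[p,p]\ \widehat{\times}\ \widehat{\prod}_{p::a\in\mathcal{F},\,a\notin\mathcal{F}'}[1-p,1-p]$. Upper belief domain probability: for a set $S$ of belief facts and a domain $D$, $BP^{\uparrow}(D,S)=[1,1]$ if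 $S$ contains no belief fact of domain $D$, and otherwise $BP^{\uparrow}(D,S)=[\mathit{Belief}(D,\bigcup B_i),\mathit{Plaus}(D,\bigcup B_i)]$ where the union ranges over all $B_i$ with $\mathit{belief}(D,B_i)\in S$. Capacity of sets of belief worlds: for $\mathcal{S}\subseteq W^{\mathcal{D}}_{\mathcal{P}}$, its domain partition $\mathrm{DomPrtn}(\mathcal{S})$ is the coarsest partition of $\mathcal{S}$ such that all worlds in a cell $S_i$ have the same set of probabilistic facts, denoted $\mathrm{probfacts}(S_i)$. For a cell $S_i$, $\beta_{prtn}(S_i)=\beta_{prb}(\mathrm{probfacts}(S_i))\ \widehat{\times}\ \widehat{\prod}_{D\in\mathcal{D}}BP^{\uparrow}\big(D,\bigcup_{(\mathcal{R},\mathcal{F}',\mathcal{D},\mathcal{B}')\in S_i}\mathcal{B}'\big)$ (so for each domain the belief events of that domain occurring in worlds of the cell are unioned), and $\xi^{\mathcal{B}}(\mathcal{S})=\widehat{\sum}_{S_i\in\mathrm{DomPrtn}(\mathcal{S})}\beta_{prtn}(S_i)$. *)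

(* Defs.v *)
From HB Require Import structures.
From mathcomp Require Import all_boot all_order all_algebra.
Set Implicit Arguments. Unset Strict Implicit. Unset Printing Implicit Defensive.
Import Order.TTheory GRing.Theory Num.Theory.
Local Open Scope ring_scope.

(* A capacity on P(X), where X is given as a subset of an ambient finite type T
   and xi is defined on all of {set T} but only its restriction to subsets of X
   matters. *)
Definition is_capacity (R : realFieldType) (T : finType) (X : {set T})
    (xi : {set T} -> R) : Prop :=
  [/\ xi set0 = 0,
      (forall A B : {set T}, A \subset B -> B \subset X -> xi A <= xi B) &
      (forall A : {set T}, A \subset X -> 0 <= xi A <= 1)].

Definition normalized_capacity_space (R : realFieldType) (T : finType)
    (X : {set T}) (xi : {set T} -> R) : Prop :=
  [/\ X != set0, is_capacity X xi & xi X = 1].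

(* ---------- Intervals as elements of R^2 ---------- *)

Definition imul (R : realFieldType) (a b : R * R) : R * R := (a.1 * b.1, a.2 * b.2).
Definition iadd (R : realFieldType) (a b : R * R) : R * R := (a.1 + b.1, a.2 + b.2).
Definition ione (R : realFieldType) : R * R := (1, 1).
Definition izero (R : realFieldType) : R * R := (0, 0).
Definition projB (R : realFieldType) (a : R * R) : R := a.1.
Definition projP (R : realFieldType) (a : R * R) : R := a.2.

Definition iprod (R : realFieldType) (I : finType) (P : pred I) (f : I -> R * R) : R * R :=
  \big[@imul R/ione R]_(i | P i) f i.
Definition isum (R : realFieldType) (I : finType) (P : pred I) (f : I -> R * R) : R * R :=
  \big[@iadd R/izero R]_(i | P i) f i.

Definition is_mass (R : realFieldType) (X : finType) (mass : {set X} -> R) : Prop :=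
  [/\ mass set0 = 0, (forall A, 0 <= mass A) & \sum_(A : {set X}) mass A = 1].

Definition Belief (R : realFieldType) (X : finType) (mass : {set X} -> R)
    (A : {set X}) : R :=
  \sum_(B : {set X} | B \subset A) mass B.

Definition Plaus (R : realFieldType) (X : finType) (mass : {set X} -> R)
    (A : {set X}) : R :=
  1 - Belief mass (~: A).

(* ---------- Ground CaLP data ----------
   - probabilistic facts: a finite index type I, fact i has probability p i;
   - belief domains: a finite index type Dom, domain d has frame X d and mass md d.
   The rules play no role in the definitions below (they are fixed in all worlds). *)

Definition beta_prb (R : realFieldType) (I : finType) (p : I -> R) (F' : {set I})
    : R * R :=
  imul (iprod (fun i => i \in F') (fun i => (p i, p i)))
       (iprod (fun i => i \notin F') (fun i => (1 - p i, 1 - p i))).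

(* A (candidate) world: its set of probabilistic facts, and for every domain
   the event of the (unique, canonical) belief fact of that domain. *)
Definition world (I Dom : finType) (X : Dom -> finType) : finType :=
  ({set I} * {dffun forall d : Dom, {set X d}})%type.

(* The set W^D_P of belief worlds: canonical sets with one belief fact per domain
   that are consistent (no empty event). *)
Definition belief_worlds (I Dom : finType) (X : Dom -> finType) : {set world I X} :=
  [set w : world I X | [forall d : Dom, w.2 d != set0]].

(* BP^up(D, S), where S is given by the set of events of the belief facts of
   domain D occurring in S. *)
Definition BPup (R : realFieldType) (X : finType) (mass : {set X} -> R)
    (evs : {set {set X}}) : R * R :=
  if evs == set0 then ione R
  else (Belief mass (\bigcup_(B in evs) B), Plaus mass (\bigcup_(B in evs) B)).

(* The cell of the domain partition of S whose worlds have probabilistic facts F'. *)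
Definition cell (I Dom : finType) (X : Dom -> finType) (S : {set world I X})
    (F' : {set I}) : {set world I X} :=
  [set w in S | (w : world I X).1 == F'].

Definition beta_prtn (R : realFieldType) (I Dom : finType) (X : Dom -> finType)
    (p : I -> R) (md : forall d : Dom, {set X d} -> R)
    (F' : {set I}) (C : {set world I X}) : R * R :=
  imul (beta_prb p F')
       (iprod predT (fun d : Dom => BPup (md d) [set (w : world I X).2 d | w in C])).

(* xi^B(S): sum over the cells of DomPrtn(S); the cells are indexed by their
   (pairwise distinct) sets of probabilistic facts. *)
Definition xiB (R : realFieldType) (I Dom : finType) (X : Dom -> finType)
    (p : I -> R) (md : forall d : Dom, {set X d} -> R)
    (S : {set world I X}) : R * R :=
  isum (fun F' : {set I} => F' \in [set (w : world I X).1 | w in S])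
       (fun F' => beta_prtn p md F' (cell S F')).

(* Main.v *)
Require Import Defs.
From HB Require Import structures.
From mathcomp Require Import all_boot all_order all_algebra.
Import Order.TTheory GRing.Theory Num.Theory.
Local Open Scope ring_scope.
Set Implicit Arguments. Unset Strict Implicit.

Section H.
Variable R : realFieldType.

Definition comp (b : bool) (a : R * R) : R := if b then a.1 else a.2.

Lemma comp_iprod b (J : finType) (P : pred J) f :
  comp b (iprod P f) = \prod_(i | P i) comp b (f i).
Proof. by rewrite /iprod; apply: (big_morph (comp b)) => [x y|]; case: b. Qed.

Lemma comp_isum b (J : finType) (P : pred J) f :
  comp b (isum P f) = \sum_(i | P i) comp b (f i).
Proof. by rewrite /isum; apply: (big_morph (comp b)) => [x y|]; case: b. Qed.

Lemma comp_imul b x y : comp b (imul x y) = comp b x * comp b y.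
Proof. by case: b. Qed.

Lemma sum_sub (T : finType) (P Q : pred T) (F : T -> R) :
  (forall i, P i -> Q i) -> (forall i, Q i -> 0 <= F i) ->
  \sum_(i | P i) F i <= \sum_(i | Q i) F i.
Proof.
move=> PQ F0; rewrite [X in X <= _]big_mkcond [X in _ <= X]big_mkcond.
apply: ler_sum => i _; case: ifP => Pi; first by rewrite (PQ _ Pi).
by case: ifP => // /F0.
Qed.

Variable (X : finType) (m : {set X} -> R) (hm : is_mass m).

Lemma Belief_ge0 (A : {set X}) : 0 <= Belief m A.
Proof. by case: hm => _ h _; apply: sumr_ge0 => B _. Qed.

Lemma Belief_mono (A B : {set X}) : A \subset B -> Belief m A <= Belief m B.
Proof.
case: hm => _ h _ AB; apply: sum_sub => // C CA; exact: subset_trans CA AB.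
Qed.

Lemma Belief_le1 (A : {set X}) : Belief m A <= 1.
Proof.
case: hm => h0 h h1; rewrite -h1 /Belief; exact: sum_sub.
Qed.

Lemma Belief_T : Belief m setT = 1.
Proof. case: hm => _ _ h1; rewrite -h1 /Belief; apply: eq_bigl => B; exact: subsetT. Qed.

Lemma Plaus_T : Plaus m setT = 1.
Proof.
case: hm => h0 _ _; rewrite /Plaus setCT /Belief (big_pred1 set0) ?h0 ?subr0 //.
by move=> B /=; apply: subset0.
Qed.

Lemma BPup_ge0 b (evs : {set {set X}}) : 0 <= comp b (BPup m evs).
Proof.
rewrite /BPup; case: ifP => _; case: b => //=; first exact: Belief_ge0.
by rewrite /Plaus subr_ge0 Belief_le1.
Qed.

Lemma BPup_mono b (e1 e2 : {set {set X}}) : e1 != set0 -> e1 \subset e2 ->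
  comp b (BPup m e1) <= comp b (BPup m e2).
Proof.
move=> n1 s12.
have n2 : e2 != set0.
  by apply: contraNneq n1 => e20; rewrite -subset0 -e20.
have U : \bigcup_(B in e1) B \subset \bigcup_(B in e2) B.
  by apply/bigcupsP => B HB; apply: bigcup_sup; exact: (subsetP s12).
rewrite /BPup (negbTE n1) (negbTE n2); case: b => /=; first exact: Belief_mono.
rewrite /Plaus lerB // Belief_mono //; by rewrite setCS.
Qed.

Lemma comp_pair b (x : R) : comp b (x, x) = x.
Proof. by case: b. Qed.

Lemma beta_eq b (I : finType) (p : I -> R) F :
  comp b (beta_prb p F) = \prod_(i | i \in F) p i * \prod_(i | i \notin F) (1 - p i).
Proof.
rewrite /beta_prb comp_imul !comp_iprod.
by congr (_ * _); apply: eq_bigr => i _; rewrite comp_pair.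
Qed.

Lemma beta_ge0 b (I : finType) (p : I -> R) (hp : forall i, 0 <= p i <= 1) F :
  0 <= comp b (beta_prb p F).
Proof.
rewrite beta_eq; apply: mulr_ge0; apply: prodr_ge0 => i _.
  by case/andP: (hp i).
by case/andP: (hp i) => _; rewrite subr_ge0.
Qed.

Lemma beta_sum b (I : finType) (p : I -> R) :
  \sum_(F : {set I}) comp b (beta_prb p F) = 1.
Proof.
have -> : (1 : R) = \prod_(i : I) \sum_(j : bool) (if j then p i else 1 - p i).
  rewrite big1 // => i _; rewrite big_bool /=; by rewrite addrC subrK.
rewrite bigA_distr_bigA /=.
rewrite (reindex (fun f : {ffun I -> bool} => [set i | f i])) /=; last first.
  exists (fun S : {set I} => [ffun i => i \in S]) => f _.
    by apply/ffunP => i; rewrite ffunE inE.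
  by apply/setP => i; rewrite inE ffunE.
apply: eq_bigr => f _; rewrite beta_eq [RHS](bigID (fun i => f i)) /=.
congr (_ * _); apply: eq_big => i; rewrite ?inE //.
  by move=> ->.
by move/negbTE => ->.
Qed.

End H.

Unset Implicit Arguments.
Section Main.
Variables (R : realFieldType) (I Dom : finType) (X : Dom -> finType)
    (p : I -> R) (md : forall d : Dom, {set X d} -> R)
    (hp : forall i : I, 0 <= p i <= 1)
    (hX : forall d : Dom, [set: X d] != set0)
    (hmass : forall d : Dom, is_mass (md d)).

Definition wT (F : {set I}) : world I X :=
  (F, @finfun Dom (fun d => {set X d}) (fun d => [set: X d])).

Lemma wT_in F : wT F \in belief_worlds I X.
Proof. by rewrite inE; apply/forallP => d; rewrite ffunE; exact: hX. Qed.

Lemma xiE b S : comp b (xiB p md S) =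
  \sum_(F | F \in [set (w : world I X).1 | w in S])
     (comp b (beta_prb p F) *
      \prod_(d : Dom) comp b (BPup (md d) [set (w : world I X).2 d | w in cell S F])).
Proof.
rewrite /xiB comp_isum; apply: eq_bigr => F _.
by rewrite /beta_prtn comp_imul comp_iprod.
Qed.

Lemma main b : normalized_capacity_space (belief_worlds I X)
    (fun S => comp b (xiB p md S)).
Proof.
set W := belief_worlds I X.
have term_ge0 : forall S F, 0 <= comp b (beta_prb p F) *
      \prod_(d : Dom) comp b (BPup (md d) [set (w : world I X).2 d | w in cell S F]).
  move=> S F; apply: mulr_ge0; first exact: (beta_ge0 _ hp).
  by apply: prodr_ge0 => d _; exact: (BPup_ge0 (hmass d)).
have mono : forall A B : {set world I X}, A \subset B ->
    comp b (xiB p md A) <= comp b (xiB p md B).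
  move=> A B AB; rewrite !xiE.
  apply: (@le_trans _ _ (\sum_(F | F \in [set (w : world I X).1 | w in A])
     (comp b (beta_prb p F) *
      \prod_(d : Dom) comp b (BPup (md d) [set (w : world I X).2 d | w in cell B F])))).
    apply: ler_sum => F /imsetP [w wA ->].
    apply: ler_wpM2l; first exact: (beta_ge0 _ hp).
    apply: ler_prod => d _; rewrite (BPup_ge0 (hmass d)) //=.
    apply: (BPup_mono (hmass d)) => //.
      apply/set0Pn; exists (w.2 d); apply/imsetP; exists w => //.
      by rewrite inE wA eqxx.
    apply: imsetS; apply/subsetP => w'; rewrite !inE => /andP [w'A ->].
    by rewrite (subsetP AB).
  apply: sum_sub.
    by move=> F FA; apply: (subsetP (imsetS _ AB)).
  by move=> F _; apply: term_ge0.
have xiW : comp b (xiB p md W) = 1.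
  rewrite xiE -[RHS](beta_sum b p).
  rewrite (eq_bigl predT) => [|F]; last first.
    by apply/imsetP; exists (wT F) => //; apply: wT_in.
  apply: eq_bigr => F _; rewrite big1 ?mulr1 // => d _.
  have Tin : [set: X d] \in [set (w : world I X).2 d | w in cell W F].
    apply/imsetP; exists (wT F); first by rewrite inE wT_in eqxx.
    by rewrite /= ffunE.
  have ne : [set (w : world I X).2 d | w in cell W F] != set0.
    by apply/set0Pn; exists [set: X d].
  have U : \bigcup_(B in [set (w : world I X).2 d | w in cell W F]) B = [set: X d].
    by apply/eqP; rewrite eqEsubset subsetT; apply: bigcup_sup Tin.
  rewrite /BPup (negbTE ne) U; case: b {term_ge0 mono} => /=.
    exact: (Belief_T (hmass d)).
  exact: (Plaus_T (hmass d)).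
split.
- by apply/set0Pn; exists (wT set0); apply: wT_in.
- split.
  + by rewrite xiE big_pred0 // => F; rewrite imset0 inE.
  + by move=> A B AB _; apply: mono.
  + move=> A AW; apply/andP; split.
      by rewrite xiE; apply: sumr_ge0 => F _; apply: term_ge0.
    by rewrite -xiW; apply: mono.
- exact: xiW.
Qed.

End Main.

Theorem mainTheorem1 (R : realFieldType) (I Dom : finType) (X : Dom -> finType)
    (p : I -> R) (md : forall d : Dom, {set X d} -> R)
    (hp : forall i : I, 0 <= p i <= 1)
    (hX : forall d : Dom, [set: X d] != set0)
    (hmass : forall d : Dom, is_mass (md d)) :
  normalized_capacity_space (belief_worlds I X) (fun S => projB (xiB p md S)) /\
  normalized_capacity_space (belief_worlds I X) (fun S => projP (xiB p md S)).
Proof. split; [exact: (main R I Dom X p md hp hX hmass true) | exact: (main R I Dom X p md hp hX hmass false)]. Qed.
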